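(* Let $\mathcal H$ be a Hilbert space, $\mathcal T,\widehat{\mathcal T}:\mathcal H\to\mathcal H$ bounded linear operators and $q,p,\widehat q,\widehat p\in\mathcal H$, and let $\Delta_{\mathcal T},\Delta_p,\Delta_q\ge0$ satisfy $\|\widehat{\mathcal T}-\mathcal T\|\le\Delta_{\mathcal T}$, $\|\widehat p-p\|\le\Delta_p$, $\|\widehat q-q\|\le\Delta_q$. For $\lambda>0$ let $\widehat\theta_\lambda$ be any minimizer over $\theta'\in\mathcal H$ of $\|\widehat{\mathcal T}\theta'-\widehat q+\widehat p\|+\lambda\|\theta'\|$. Then $$\|\mathcal T\widehat\theta_\lambda-q+p\|\le\max\Big\{1,\frac{\Delta_{\mathcal T}}{\lambda}\Big\}\inf_{\theta'\in\mathcal H}\Big(\|\mathcal T\theta'-q+p\|+(\Delta_{\mathcal T}+\lambda)\|\theta'\|\Big)+\max\Big\{2,1+\frac{\Delta_{\mathcal T}}{\lambda}\Big\}(\Delta_q+\Delta_p).$$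
   Context: $\|\cdot\|$ denotes the Hilbert space norm on elements and the operator norm on operators. *)

(* Defs.v *)
From HB Require Import structures.
From mathcomp Require Import all_boot all_order all_algebra.
From mathcomp Require Import all_classical all_reals all_analysis.
Set Implicit Arguments. Unset Strict Implicit. Unset Printing Implicit Defensive.
Import Order.TTheory GRing.Theory Num.Theory.
Import numFieldNormedType.Exports.
Local Open Scope classical_set_scope.
Local Open Scope ring_scope.

(* ip is a real inner product on V inducing the norm of V:
   symmetric, linear in the first argument, and <x,x> = |x|^2
   (positive definiteness then follows from the norm axioms). *)
Definition is_inner_product {R : realType} {V : normedModType R}
  (ip : V -> V -> R) : Prop :=
  (forall x y, ip x y = ip y x) /\
  (forall (a : R) x y z, ip (a *: x + y) z = a * ip x z + ip y z) /\
  (forall x, ip x x = `|x| ^+ 2).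

Definition is_hilbert {R : realType} (V : completeNormedModType R) : Prop :=
  exists ip : V -> V -> R, is_inner_product ip.

Definition opnorm {R : realType} {V : normedModType R} (f : V -> V) : R :=
  sup [set `|f x| | x in [set x : V | `|x| <= 1]].

(* Main.v *)
Require Import Defs.
From HB Require Import structures.
From mathcomp Require Import all_boot all_order all_algebra.
From mathcomp Require Import all_classical all_reals all_analysis.
From mathcomp Require Import lra.
Import Order.TTheory GRing.Theory Num.Theory.
Import numFieldNormedType.Exports.
Local Open Scope classical_set_scope.
Local Open Scope ring_scope.

Lemma lin_bound (R : realType) (H : completeNormedModType R)
  (T : {linear H -> H}) (cT : continuous T) :
  exists k : R, 0 <= k /\ forall x, `|T x| <= k * `|x|.
Proof.
have /linear_boundedP [M [_ HM]] := continuous_linear_bounded 0 (cT 0).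
exists (Num.max (M + 1) 0); split; first by rewrite le_max lexx orbT.
apply: HM; by rewrite lt_max ltrDl ltr01.
Qed.
Arguments lin_bound {R H T}.

Lemma opnorm_le (R : realType) (H : completeNormedModType R)
  (T Th : {linear H -> H}) (cT : continuous T) (cTh : continuous Th) x :
  `|Th x - T x| <= opnorm (fun x => Th x - T x) * `|x|.
Proof.
have [k1 [k10 h1]] := lin_bound cT.
have [k2 [k20 h2]] := lin_bound cTh.
have [->|x0] := eqVneq x 0; first by rewrite normr0 mulr0 !raddf0 addr0 normr0.
have nx : 0 < `|x| by rewrite normr_gt0.
set y := `|x|^-1 *: x.
have ny : `|y| = 1 by rewrite normrZ normfV normr_id mulVf // gt_eqF.
have hub : has_ubound [set `|Th z - T z| | z in [set z : H | `|z| <= 1]].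
  exists (k2 + k1) => _ [z /= hz <-].
  apply: (le_trans (ler_normB _ _)); apply: lerD.
    by apply: (le_trans (h2 z)); rewrite -[leRHS]mulr1 ler_wpM2l.
  by apply: (le_trans (h1 z)); rewrite -[leRHS]mulr1 ler_wpM2l.
have hy : `|y| <= 1 by rewrite ny.
have := ub_le_sup hub (ex_intro2 _ _ y hy erefl).
rewrite /opnorm /y !linearZ /= -scalerDr normrZ normfV normr_id.
move=> h; have := ler_wpM2l (ltW nx) h.
by rewrite mulrA mulfV ?gt_eqF // mul1r mulrC.
Qed.
Arguments opnorm_le {R H T Th}.

Theorem lemma8 (R : realType) (H : completeNormedModType R)
  (hH : is_hilbert H)
  (T Th : {linear H -> H}) (cT : continuous T) (cTh : continuous Th)
  (q p qh ph : H) (DT Dp Dq : R)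
  (hDT : 0 <= DT) (hDp : 0 <= Dp) (hDq : 0 <= Dq)
  (hT : opnorm (fun x => Th x - T x) <= DT)
  (hp : `|ph - p| <= Dp) (hq : `|qh - q| <= Dq)
  (lam : R) (hlam : 0 < lam) (thh : H)
  (hmin : forall t : H,
      `|Th thh - qh + ph| + lam * `|thh| <= `|Th t - qh + ph| + lam * `|t|) :
  `|T thh - q + p| <=
    Num.max 1 (DT / lam) *
      inf [set `|T t - q + p| + (DT + lam) * `|t| | t in [set: H]]
    + Num.max 2 (1 + DT / lam) * (Dq + Dp).
Proof.
have hd : forall t, `|(T t - q + p) - (Th t - qh + ph)| <= DT * `|t| + (Dq + Dp).
  move=> t.
  have -> : (T t - q + p) - (Th t - qh + ph) = (T t - Th t) + (qh - q) + (p - ph).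
    rewrite !opprD !opprK !addrA; congr (_ - ph).
    by rewrite -(addrAC _ (- Th t)) -(addrAC _ (- Th t)) (addrAC _ p) (addrAC _ (-q)).
  apply: (le_trans (ler_normD _ _)); rewrite [leRHS]addrA; apply: lerD; last by rewrite distrC.
  apply: (le_trans (ler_normD _ _)); apply: lerD => //.
  rewrite distrC; apply: (le_trans (opnorm_le cT cTh t)).
  by rewrite ler_wpM2r.
set M := Num.max 1 (DT / lam).
set D := Dq + Dp.
have M1 : 1 <= M by rewrite le_max lexx.
have M0 : 0 < M by apply: lt_le_trans M1.
have MD : DT <= M * lam by rewrite -ler_pdivrMr // le_max lexx orbT.
have key : forall t, `|T thh - q + p| <=
    M * (`|T t - q + p| + (DT + lam) * `|t|) + (M + 1) * D.
  move=> t.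
  have e1 : `|T thh - q + p| <= `|Th thh - qh + ph| + DT * `|thh| + D.
    have := hd thh; have := ler_normD (Th thh - qh + ph) ((T thh - q + p) - (Th thh - qh + ph)).
    rewrite [X in `|X| <= _ -> _]addrC subrK; rewrite /D; lra.
  have e2 : `|Th t - qh + ph| <= `|T t - q + p| + DT * `|t| + D.
    have := hd t; have := ler_normB (T t - q + p) ((T t - q + p) - (Th t - qh + ph)).
    rewrite [in X in `|X| <= _ -> _]opprB [X in `|X| <= _ -> _]addrC subrK; rewrite /D; lra.
  have e3 : `|Th thh - qh + ph| + DT * `|thh| <=
      M * (`|Th thh - qh + ph| + lam * `|thh|).
    rewrite mulrDr mulrA; apply: lerD.
      by rewrite -[leLHS]mul1r ler_wpM2r.
    by rewrite ler_wpM2r // (mulrC M).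
  apply: (le_trans e1); apply: (le_trans (lerD e3 (lexx _))).
  have e4 := hmin t.
  have : M * (`|Th thh - qh + ph| + lam * `|thh|) <=
     M * (`|T t - q + p| + (DT + lam) * `|t| + D).
    rewrite ler_pM2l //; apply: (le_trans e4).
    rewrite mulrDl; have := e2; lra.
  rewrite mulrDr; lra.
have -> : Num.max 2 (1 + DT / lam) = M + 1.
  rewrite /M !maxEle.
  by case: ifPn => h1; case: ifPn => h2; move: h1 h2; rewrite -?ltNge => h1 h2; lra.
set S := [set _ | _ in _].
have hinf : (`|T thh - q + p| - (M + 1) * D) / M <= inf S.
  apply: lb_le_inf.
    by exists (`|T 0 - q + p| + (DT + lam) * `|0 : H|); exists 0.
  move=> _ [t _ <-]; rewrite ler_pdivrMr // lerBlDr mulrC; exact: key.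
move: hinf; rewrite ler_pdivrMr // lerBlDr mulrC //.
Qed.
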